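(* Let $P(k)=C_{p0}T_{p0}^k-C_mT_m^k$ be a high pair function (so $C_{p0},C_m>0$ and $0<T_m<T_{p0}<1$), and let $C_{pi}>0$, $T_{pi}$ with $T_m<T_{pi}<1$, $i=1,\dots,N$. Then the total function $S(k)=P(k)+\sum_{i=1}^N C_{pi}T_{pi}^k$ has exactly one point of abscissa intersection, exactly one maximum and exactly one inflection point; it is concave to the left of the inflection point and convex to the right of it, and $S(k)\to 0$ as $k\to\infty$.
   Context: A high pair function is $C_pT_p^k-C_mT_m^k$ with $C_p,C_m>0$ and $0<T_m<T_p<1$, real variable $k$. *)

(* Defs.v *)
From Stdlib Require Import Reals.
From Coquelicot Require Import Coquelicot.
Open Scope R_scope.

Fixpoint sum1N (f : nat -> R) (n : nat) : R :=
  match n with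
  | O => 0
  | S m => sum1N f m + f (S m)
  end.

Definition total_fun (Cp0 Tp0 Cm Tm : R) (Cp Tp : nat -> R) (N : nat) (k : R) : R :=
  Cp0 * Rpower Tp0 k - Cm * Rpower Tm k + sum1N (fun i => Cp i * Rpower (Tp i) k) N.

Definition convex_on (I : R -> Prop) (f : R -> R) : Prop :=
  forall x y t, I x -> I y -> 0 <= t <= 1 ->
    f (t * x + (1 - t) * y) <= t * f x + (1 - t) * f y.

Definition concave_on (I : R -> Prop) (f : R -> R) : Prop :=
  convex_on I (fun x => - f x).

Definition local_max (f : R -> R) (x : R) : Prop :=
  exists eps, 0 < eps /\ forall y, Rabs (y - x) < eps -> f y <= f x.

Definition inflection_point (f : R -> R) (c : R) : Prop :=
  exists eps, 0 < eps /\
    ((concave_on (fun x => c - eps < x <= c) f /\ convex_on (fun x => c <= x < c + eps) f)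
  \/ (convex_on (fun x => c - eps < x <= c) f /\ concave_on (fun x => c <= x < c + eps) f)).

(* Main.v *)
Require Import Defs.
From Stdlib Require Import Reals Lra Lia.
From Coquelicot Require Import Coquelicot.
Open Scope R_scope.

Lemma sum1N_ext f g n : (forall i, (1 <= i <= n)%nat -> f i = g i) -> sum1N f n = sum1N g n.
Proof.
  induction n; simpl; intros H; auto.
  rewrite IHn; [rewrite H; auto; lia| intros i Hi; apply H; lia].
Qed.

Lemma sum1N_opp f n : sum1N (fun i => - f i) n = - sum1N f n.
Proof. induction n; simpl; [lra| rewrite IHn; lra]. Qed.

Lemma sum1N_scal c f n : sum1N (fun i => c * f i) n = c * sum1N f n.
Proof. induction n; simpl; [lra| rewrite IHn; lra]. Qed.

Lemma sum1N_le f g n : (forall i, (1 <= i <= n)%nat -> f i <= g i) -> sum1N f n <= sum1N g n.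
Proof.
  induction n; simpl; intros H; [lra|].
  assert (sum1N f n <= sum1N g n) by (apply IHn; intros; apply H; lia).
  assert (f (S n) <= g (S n)) by (apply H; lia). lra.
Qed.

Lemma sum1N_small (d del : nat -> R) n :
  (forall i, (1 <= i <= n)%nat -> 0 < d i /\ 0 < del i) ->
  forall eps, 0 < eps -> exists K, forall k, k <= K ->
    sum1N (fun i => d i * exp (k * del i)) n < eps.
Proof.
  induction n; intros H eps Heps; simpl.
  - exists 0; intros; lra.
  - destruct (IHn (fun i Hi => H i ltac:(lia)) (eps/2)) as [K1 HK1]; [lra|].
    destruct (H (S n)) as [Hd Hdel]; [lia|].
    exists (Rmin K1 (ln (eps / 2 / d (S n)) / del (S n))).
    intros k Hk.
    assert (k <= K1) by (eapply Rle_trans; [exact Hk| apply Rmin_l]).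
    assert (k <= ln (eps / 2 / d (S n)) / del (S n)) by (eapply Rle_trans; [exact Hk| apply Rmin_r]).
    specialize (HK1 k H0).
    assert (k * del (S n) <= ln (eps / 2 / d (S n))).
    { apply Rmult_le_compat_r with (r := del (S n)) in H1; [|lra].
      replace (ln (eps / 2 / d (S n)) / del (S n) * del (S n)) with (ln (eps / 2 / d (S n))) in H1 by (field; lra). lra. }
    assert (exp (k * del (S n)) <= eps / 2 / d (S n)).
    { rewrite <- (exp_ln (eps/2/d (S n))).
      - destruct (Req_dec (k * del (S n)) (ln (eps / 2 / d (S n)))) as [E|E];
          [rewrite E; lra| left; apply exp_increasing; lra].
      - apply Rdiv_lt_0_compat; lra. }
    assert (d (S n) * exp (k * del (S n)) <= eps / 2).
    { apply Rmult_le_compat_l with (r := d (S n)) in H3; [|lra].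
      replace (d (S n) * (eps / 2 / d (S n))) with (eps/2) in H3 by (field; lra). lra. }
    lra.
Qed.

Lemma exp_term_derive c L k : is_derive (fun k => c * exp (k * L)) k (c * L * exp (k * L)).
Proof. auto_derive; [auto| ring]. Qed.

Lemma sum_derive (c L : nat -> R) n k :
  is_derive (fun k => sum1N (fun i => c i * exp (k * L i)) n) k
            (sum1N (fun i => c i * L i * exp (k * L i)) n).
Proof.
  induction n; simpl.
  - apply is_derive_Reals, derivable_pt_lim_const.
  - apply (is_derive_plus (fun k => sum1N (fun i => c i * exp (k * L i)) n)
              (fun k => c (S n) * exp (k * L (S n)))); auto. apply exp_term_derive.
Qed.

Definition Hf d0 del0 (d del : nat -> R) n e k :=
  d0 * exp (k * del0) + sum1N (fun i => d i * exp (k * del i)) n - e.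

Lemma Hf_derive d0 del0 d del n e k :
  is_derive (Hf d0 del0 d del n e) k
    (d0 * del0 * exp (k * del0) + sum1N (fun i => d i * del i * exp (k * del i)) n).
Proof.
  unfold Hf.
  replace (d0 * del0 * exp (k * del0) + sum1N (fun i => d i * del i * exp (k * del i)) n)
    with (d0 * del0 * exp (k * del0) + sum1N (fun i => d i * del i * exp (k * del i)) n - 0) by ring.
  apply is_derive_Reals.
  apply (derivable_pt_lim_minus (fun k => d0 * exp (k * del0) + sum1N (fun i => d i * exp (k * del i)) n) (fun _ => e)); [| apply derivable_pt_lim_const].
  apply is_derive_Reals.
  apply (is_derive_plus (fun k => d0 * exp (k * del0))); [apply exp_term_derive| apply sum_derive].
Qed.

Lemma Hf_cont d0 del0 d del n e : continuity (Hf d0 del0 d del n e).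
Proof.
  intro k. apply derivable_continuous_pt. eexists. apply is_derive_Reals, Hf_derive.
Qed.

Section HS.
Variables (d0 del0 : R) (d del : nat -> R) (n : nat) (e : R).
Hypothesis Hd0 : 0 < d0.
Hypothesis Hdel0 : 0 < del0.
Hypothesis Hd : forall i, (1 <= i <= n)%nat -> 0 < d i /\ 0 < del i.
Hypothesis He : 0 < e.

Lemma Hf_mono x y : x < y -> Hf d0 del0 d del n e x < Hf d0 del0 d del n e y.
Proof.
  intros Hxy. unfold Hf.
  assert (exp (x * del0) < exp (y * del0)) by (apply exp_increasing; nra).
  assert (sum1N (fun i => d i * exp (x * del i)) n <= sum1N (fun i => d i * exp (y * del i)) n).
  { apply sum1N_le. intros i Hi. destruct (Hd i Hi).
    apply Rmult_le_compat_l; [lra|]. left; apply exp_increasing; nra. }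
  nra.
Qed.

Lemma Hf_root : exists z, Hf d0 del0 d del n e z = 0 /\
  (forall k, k < z -> Hf d0 del0 d del n e k < 0) /\
  (forall k, z < k -> 0 < Hf d0 del0 d del n e k).
Proof.
  set (f := Hf d0 del0 d del n e).
  assert (Hneg : exists a, f a < 0).
  { destruct (sum1N_small d del n Hd (e/2)) as [K HK]; [lra|].
    set (a := Rmin K (ln (e / 2 / d0) / del0)).
    exists a. unfold f, Hf.
    assert (a <= K) by apply Rmin_l.
    assert (a <= ln (e / 2 / d0) / del0) by apply Rmin_r.
    specialize (HK a H).
    assert (a * del0 <= ln (e / 2 / d0)).
    { apply Rmult_le_compat_r with (r := del0) in H0; [|lra].
      replace (ln (e / 2 / d0) / del0 * del0) with (ln (e / 2 / d0)) in H0 by (field; lra). lra. }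
    assert (exp (a * del0) <= e / 2 / d0).
    { rewrite <- (exp_ln (e/2/d0)) by (apply Rdiv_lt_0_compat; lra).
      destruct (Req_dec (a * del0) (ln (e / 2 / d0))) as [E|E];
          [rewrite E; lra| left; apply exp_increasing; lra]. }
    assert (d0 * exp (a * del0) <= e / 2).
    { apply Rmult_le_compat_l with (r := d0) in H2; [|lra].
      replace (d0 * (e / 2 / d0)) with (e/2) in H2 by (field; lra). lra. }
    lra. }
  assert (Hpos : exists b, 0 < f b).
  { exists (ln ((e + 1) / d0) / del0). unfold f, Hf.
    replace (ln ((e + 1) / d0) / del0 * del0) with (ln ((e + 1) / d0)) by (field; lra).
    rewrite exp_ln by (apply Rdiv_lt_0_compat; lra).
    assert (0 <= sum1N (fun i => d i * exp (ln ((e + 1) / d0) / del0 * del i)) n).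
    { replace 0 with (sum1N (fun _ => 0) n).
      - apply sum1N_le. intros i Hi. destruct (Hd i Hi). left; apply Rmult_lt_0_compat; auto; apply exp_pos.
      - clear; induction n; simpl; lra. }
    replace (d0 * ((e + 1) / d0)) with (e + 1) by (field; lra). lra. }
  destruct Hneg as [a Ha], Hpos as [b Hb].
  destruct (IVT_gen f a b 0 (Hf_cont _ _ _ _ _ _)) as [z [_ Hz]].
  { split; [apply Rle_trans with (f a); [apply Rmin_l| lra]
           | apply Rle_trans with (f b); [lra| apply Rmax_r]]. }
  exists z; split; [exact Hz|]. split; intros k Hk.
  - rewrite <- Hz. apply Hf_mono; auto.
  - rewrite <- Hz. apply Hf_mono; auto.
Qed.
End HS.

Section Conv.
Variables (f f1 f2 : R -> R).
Hypothesis D1 : forall x, is_derive f x (f1 x).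
Hypothesis D2 : forall x, is_derive f1 x (f2 x).

Lemma chord_gap x y t : x < y -> 0 < t < 1 -> exists eta p, x < eta < y /\ 0 < p /\
  t * f x + (1 - t) * f y - f (t * x + (1 - t) * y) = p * f2 eta.
Proof.
  intros Hxy Ht. set (z := t * x + (1 - t) * y).
  assert (x < z < y) by (unfold z; split; nra).
  destruct (MVT_cor2 f f1 x z) as [a [Ha1 Ha2]]; [lra| intros; apply is_derive_Reals, D1|].
  destruct (MVT_cor2 f f1 z y) as [b [Hb1 Hb2]]; [lra| intros; apply is_derive_Reals, D1|].
  destruct (MVT_cor2 f1 f2 a b) as [c [Hc1 Hc2]]; [lra| intros; apply is_derive_Reals, D2|].
  exists c, (t * (1 - t) * (y - x) * (b - a)). split; [lra|]. split.
  - apply Rmult_lt_0_compat; [|lra]. apply Rmult_lt_0_compat; [nra|lra].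
  - assert (z - x = (1 - t) * (y - x)) by (unfold z; ring).
    assert (y - z = t * (y - x)) by (unfold z; ring).
    transitivity (t * (1 - t) * (y - x) * (f1 b - f1 a)); [|rewrite Hc1; ring].
    replace (t * f x + (1 - t) * f y - f z) with (t * -(f z - f x) + (1 - t) * (f y - f z)) by ring.
    rewrite Ha1, Hb1, H0, H1. ring.
Qed.

Definition interval (I : R -> Prop) := forall x y z, I x -> I y -> x <= z <= y -> I z.

Lemma convex_from I : interval I -> (forall x, I x -> 0 <= f2 x) -> convex_on I f.
Proof.
  intros HI Hf2 x y t Ix Iy Ht.
  destruct (Req_dec t 0) as [->|Ht0]. { replace (0 * x + (1 - 0) * y) with y by ring. lra. }
  destruct (Req_dec t 1) as [->|Ht1]. { replace (1 * x + (1 - 1) * y) with x by ring. lra. }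
  destruct (Rtotal_order x y) as [Hxy|[->|Hxy]].
  - destruct (chord_gap x y t Hxy ltac:(lra)) as [eta [p [He [Hp Hg]]]].
    assert (0 <= f2 eta) by (apply Hf2, (HI x y); auto; lra). nra.
  - replace (t * y + (1 - t) * y) with y by ring. lra.
  - destruct (chord_gap y x (1 - t) Hxy ltac:(lra)) as [eta [p [He [Hp Hg]]]].
    assert (0 <= f2 eta) by (apply Hf2, (HI y x); auto; lra).
    replace (1 - (1 - t)) with t in Hg by ring.
    replace (t * x + (1 - t) * y) with ((1 - t) * y + t * x) by ring. nra.
Qed.

Lemma not_convex I x y : x < y -> I x -> I y -> (forall z, x < z < y -> f2 z < 0) ->
  ~ convex_on I f.
Proof.
  intros Hxy Ix Iy Hneg Hc.
  destruct (chord_gap x y (1/2) Hxy ltac:(lra)) as [eta [p [He [Hp Hg]]]].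
  specialize (Hc x y (1/2) Ix Iy ltac:(lra)). specialize (Hneg eta He). nra.
Qed.

Lemma not_concave I x y : x < y -> I x -> I y -> (forall z, x < z < y -> 0 < f2 z) ->
  ~ concave_on I f.
Proof.
  intros Hxy Ix Iy Hpos Hc.
  destruct (chord_gap x y (1/2) Hxy ltac:(lra)) as [eta [p [He [Hp Hg]]]].
  specialize (Hc x y (1/2) Ix Iy ltac:(lra)). simpl in Hc. specialize (Hpos eta He). nra.
Qed.

Lemma incr_from a b x y : a <= x -> x < y -> y <= b -> (forall z, a < z < b -> 0 < f1 z) -> f x < f y.
Proof.
  intros Hax Hxy Hyb Hp.
  destruct (MVT_cor2 f f1 x y) as [c [Hc1 Hc2]]; [lra| intros; apply is_derive_Reals, D1|].
  assert (0 < f1 c) by (apply Hp; lra). nra.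
Qed.
End Conv.

Lemma concave_from f f1 f2 I : (forall x, is_derive f x (f1 x)) -> (forall x, is_derive f1 x (f2 x)) ->
  interval I -> (forall x, I x -> f2 x <= 0) -> concave_on I f.
Proof.
  intros D1 D2 HI H. unfold concave_on.
  apply (convex_from _ (fun x => - f1 x) (fun x => - f2 x)); auto.
  - intro x. apply (is_derive_opp f). auto.
  - intro x. apply (is_derive_opp f1). auto.
  - intros x Hx. specialize (H x Hx). lra.
Qed.

Lemma term_lim c L : L < 0 -> is_lim (fun k => c * exp (k * L)) p_infty 0.
Proof.
  intros HL.
  assert (H : is_lim (fun k => exp (k * L)) p_infty 0).
  { apply (is_lim_comp exp (fun k => k * L) p_infty 0 m_infty).
    - apply is_lim_exp_m.
    - replace m_infty with (Rbar_mult p_infty L).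
      + apply is_lim_scal_r, is_lim_id.
      + simpl. unfold Rbar_mult, Rbar_mult'. destruct (Rle_dec 0 L); [exfalso; lra|]. reflexivity.
    - exists 0. intros; discriminate. }
  apply (is_lim_scal_l _ c) in H. simpl in H. rewrite Rmult_0_r in H. exact H.
Qed.

Section Main.
Variables (Cp0 Tp0 Cm Tm : R) (Cp Tp : nat -> R) (N : nat).

Definition Ef n k := Cp0 * ln Tp0 ^ n * exp (k * ln Tp0) - Cm * ln Tm ^ n * exp (k * ln Tm)
  + sum1N (fun i => Cp i * ln (Tp i) ^ n * exp (k * ln (Tp i))) N.

Lemma Ef_derive n k : is_derive (Ef n) k (Ef (S n) k).
Proof.
  unfold Ef. apply is_derive_Reals.
  replace (Cp0 * ln Tp0 ^ S n * exp (k * ln Tp0) - Cm * ln Tm ^ S n * exp (k * ln Tm) +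
     sum1N (fun i => Cp i * ln (Tp i) ^ S n * exp (k * ln (Tp i))) N)
  with ((Cp0 * ln Tp0 ^ n * ln Tp0 * exp (k * ln Tp0) - Cm * ln Tm ^ n * ln Tm * exp (k * ln Tm)) +
     sum1N (fun i => (Cp i * ln (Tp i) ^ n) * ln (Tp i) * exp (k * ln (Tp i))) N).
  2:{ simpl. f_equal; [ring|]. apply sum1N_ext. intros. simpl. ring. }
  apply (derivable_pt_lim_plus (fun k => Cp0 * ln Tp0 ^ n * exp (k * ln Tp0) - Cm * ln Tm ^ n * exp (k * ln Tm))
     (fun k => sum1N (fun i => Cp i * ln (Tp i) ^ n * exp (k * ln (Tp i))) N)).
  - apply (derivable_pt_lim_minus (fun k => Cp0 * ln Tp0 ^ n * exp (k * ln Tp0)) (fun k => Cm * ln Tm ^ n * exp (k * ln Tm)));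
      apply is_derive_Reals, exp_term_derive.
  - apply is_derive_Reals, (sum_derive (fun i => Cp i * ln (Tp i) ^ n)).
Qed.

Lemma S_Ef k : total_fun Cp0 Tp0 Cm Tm Cp Tp N k = Ef 0 k.
Proof.
  unfold total_fun, Ef, Rpower. simpl. f_equal; [ring|]. apply sum1N_ext; intros; ring.
Qed.

Lemma Ef_factor n s k : s * s = 1 -> Ef n k = s * exp (k * ln Tm) *
  Hf (s * (Cp0 * ln Tp0 ^ n)) (ln Tp0 - ln Tm) (fun i => s * (Cp i * ln (Tp i) ^ n))
     (fun i => ln (Tp i) - ln Tm) N (s * (Cm * ln Tm ^ n)) k.
Proof.
  intros Hs. unfold Ef, Hf.
  assert (Hx : forall L, exp (k * L) = exp (k * ln Tm) * exp (k * (L - ln Tm))).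
  { intros L. rewrite <- exp_plus. f_equal. ring. }
  rewrite (Hx (ln Tp0)).
  rewrite (sum1N_ext _ (fun i => (s * exp (k * ln Tm)) * (s * (Cp i * ln (Tp i) ^ n) * exp (k * (ln (Tp i) - ln Tm))))).
  2:{ intros i _. rewrite (Hx (ln (Tp i))). transitivity ((s * s) * (Cp i * ln (Tp i) ^ n * (exp (k * ln Tm) * exp (k * (ln (Tp i) - ln Tm))))); [rewrite Hs; ring| ring]. }
  rewrite sum1N_scal.
  transitivity ((s*s) * (Cp0 * ln Tp0 ^ n * (exp (k * ln Tm) * exp (k * (ln Tp0 - ln Tm))) -
    Cm * ln Tm ^ n * exp (k * ln Tm)) + s * exp (k * ln Tm) *
     sum1N (fun i => s * (Cp i * ln (Tp i) ^ n) * exp (k * (ln (Tp i) - ln Tm))) N); [rewrite Hs; ring| ring].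
Qed.
End Main.

Lemma Ef_root Cp0 Tp0 Cm Tm Cp Tp N n s : s * s = 1 ->
  0 < s * (Cp0 * ln Tp0 ^ n) -> 0 < ln Tp0 - ln Tm ->
  (forall i, (1 <= i <= N)%nat -> 0 < s * (Cp i * ln (Tp i) ^ n) /\ 0 < ln (Tp i) - ln Tm) ->
  0 < s * (Cm * ln Tm ^ n) ->
  exists z, Ef Cp0 Tp0 Cm Tm Cp Tp N n z = 0 /\
   (forall k, k < z -> s * Ef Cp0 Tp0 Cm Tm Cp Tp N n k < 0) /\
   (forall k, z < k -> 0 < s * Ef Cp0 Tp0 Cm Tm Cp Tp N n k).
Proof.
  intros Hs H0 H1 H2 H3.
  destruct (Hf_root _ _ _ _ N _ H0 H1 H2 H3) as [z [Hz [Hl Hr]]].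
  exists z. repeat split.
  - rewrite (Ef_factor _ _ _ _ _ _ _ n s z Hs), Hz. ring.
  - intros k Hk. rewrite (Ef_factor _ _ _ _ _ _ _ n s k Hs).
    specialize (Hl k Hk). pose proof (exp_pos (k * ln Tm)).
    replace (s * (s * exp (k * ln Tm) * Hf (s * (Cp0 * ln Tp0 ^ n)) (ln Tp0 - ln Tm)
         (fun i => s * (Cp i * ln (Tp i) ^ n)) (fun i => ln (Tp i) - ln Tm) N (s * (Cm * ln Tm ^ n)) k))
     with ((s * s) * exp (k * ln Tm) * Hf (s * (Cp0 * ln Tp0 ^ n)) (ln Tp0 - ln Tm)
         (fun i => s * (Cp i * ln (Tp i) ^ n)) (fun i => ln (Tp i) - ln Tm) N (s * (Cm * ln Tm ^ n)) k) by ring.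
    rewrite Hs. nra.
  - intros k Hk. rewrite (Ef_factor _ _ _ _ _ _ _ n s k Hs).
    specialize (Hr k Hk). pose proof (exp_pos (k * ln Tm)).
    replace (s * (s * exp (k * ln Tm) * Hf (s * (Cp0 * ln Tp0 ^ n)) (ln Tp0 - ln Tm)
         (fun i => s * (Cp i * ln (Tp i) ^ n)) (fun i => ln (Tp i) - ln Tm) N (s * (Cm * ln Tm ^ n)) k))
     with ((s * s) * exp (k * ln Tm) * Hf (s * (Cp0 * ln Tp0 ^ n)) (ln Tp0 - ln Tm)
         (fun i => s * (Cp i * ln (Tp i) ^ n)) (fun i => ln (Tp i) - ln Tm) N (s * (Cm * ln Tm ^ n)) k) by ring.
    rewrite Hs. nra.
Qed.

Lemma sum_lim (c L : nat -> R) n : (forall i, (1 <= i <= n)%nat -> L i < 0) ->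
  is_lim (fun k => sum1N (fun i => c i * exp (k * L i)) n) p_infty 0.
Proof.
  induction n; intros H; simpl.
  - apply is_lim_const.
  - replace (Finite 0) with (Finite (0 + 0)) by (f_equal; ring).
    apply (is_lim_plus' (fun k => sum1N (fun i => c i * exp (k * L i)) n) (fun k => c (S n) * exp (k * L (S n)))).
    + apply IHn; intros; apply H; lia.
    + apply term_lim, H; lia.
Qed.

Theorem lemma3 (Cp0 Tp0 Cm Tm : R) (Cp Tp : nat -> R) (N : nat) :
  0 < Cp0 -> 0 < Cm -> 0 < Tm -> Tm < Tp0 -> Tp0 < 1 ->
  (forall i, (1 <= i <= N)%nat -> 0 < Cp i /\ Tm < Tp i /\ Tp i < 1) ->
  let S := total_fun Cp0 Tp0 Cm Tm Cp Tp N in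
  (exists! k, S k = 0) /\
  (exists! k, local_max S k) /\
  (exists! c, inflection_point S c) /\
  (forall c, inflection_point S c ->
     concave_on (fun x => x <= c) S /\ convex_on (fun x => c <= x) S) /\
  is_lim S p_infty 0.
Proof.
  intros HCp0 HCm HTm HTp0 HTp01 Hi S.
  assert (HL0 : ln Tp0 < 0) by (rewrite <- ln_1; apply ln_increasing; lra).
  assert (HLm : ln Tm < ln Tp0) by (apply ln_increasing; lra).
  assert (HLi : forall i, (1 <= i <= N)%nat -> 0 < Cp i /\ ln Tm < ln (Tp i) /\ ln (Tp i) < 0).
  { intros i Hi'. destruct (Hi i Hi') as [A [B C]]. split; auto. split.
    - apply ln_increasing; lra.
    - rewrite <- ln_1; apply ln_increasing; lra. }
  set (E := Ef Cp0 Tp0 Cm Tm Cp Tp N).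
  assert (HS : forall k, S k = E 0%nat k) by (intro; apply S_Ef).
  assert (D0 : forall k, is_derive S k (E 1%nat k)).
  { intro k. apply (is_derive_ext (E 0%nat)); [intro; symmetry; apply HS| apply Ef_derive]. }
  assert (D1 : forall k, is_derive (E 1%nat) k (E 2%nat k)) by (intro; apply Ef_derive).
  destruct (Ef_root Cp0 Tp0 Cm Tm Cp Tp N 0 1) as [z0 [Z0 [L0 R0]]]; simpl; try lra;
    try (intros i Hi'; destruct (HLi i Hi') as [A [B C]]; split; nra).
  destruct (Ef_root Cp0 Tp0 Cm Tm Cp Tp N 1 (-1)) as [z1 [Z1 [L1 R1]]]; simpl; try lra; try nra;
    try (intros i Hi'; destruct (HLi i Hi') as [A [B C]]; split; nra).
  assert (Q0 : 0 < ln Tp0 * ln Tp0) by nra. assert (Qm : 0 < ln Tm * ln Tm) by nra.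
  destruct (Ef_root Cp0 Tp0 Cm Tm Cp Tp N 2 1) as [z2 [Z2 [L2 R2]]]; simpl; try lra; try nra;
    try (intros i Hi'; destruct (HLi i Hi') as [A [B C]];
         assert (0 < ln (Tp i) * ln (Tp i)) by nra; split; nra).
  fold E in Z0, L0, R0, Z1, L1, R1, Z2, L2, R2.
  assert (Inc : forall x y, x < y -> y <= z1 -> S x < S y).
  { intros x y Hxy Hy. apply (incr_from S (E 1%nat) D0 x z1); try lra.
    intros z Hz. specialize (L1 z ltac:(lra)). lra. }
  assert (Dec : forall x y, z1 <= x -> x < y -> S y < S x).
  { intros x y Hx Hxy.
    assert (- S x < - S y); [|lra].
    apply (incr_from (fun k => - S k) (fun k => - E 1%nat k)) with (a := z1) (b := y); try lra.
    - intro k. apply (is_derive_opp S). auto.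
    - intros z Hz. specialize (R1 z ltac:(lra)). lra. }
  assert (Max : forall y, S y <= S z1).
  { intro y. destruct (Rtotal_order y z1) as [H|[H|H]].
    - left; apply Inc; lra.
    - subst; lra.
    - left; apply Dec; lra. }
  assert (Conc : forall c, c <= z2 -> concave_on (fun x => x <= c) S).
  { intros c Hc. apply (concave_from S (E 1%nat) (E 2%nat)); auto.
    - intros x y z Hx Hy Hz. lra.
    - intros x Hx. destruct (Req_dec x z2) as [->|Hne]; [lra|].
      specialize (L2 x ltac:(lra)). lra. }
  assert (Conv : forall c, z2 <= c -> convex_on (fun x => c <= x) S).
  { intros c Hc. apply (convex_from S (E 1%nat) (E 2%nat)); auto.
    - intros x y z Hx Hy Hz. lra.
    - intros x Hx. destruct (Req_dec x z2) as [->|Hne]; [lra|].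
      specialize (R2 x ltac:(lra)). lra. }
  assert (Infl : forall c, inflection_point S c -> c = z2).
  { intros c [eps [Heps [[Hcc Hcv]|[Hcv Hcc]]]];
    destruct (Rtotal_order c z2) as [H|[H|H]]; auto; exfalso.
    - set (m := Rmin eps (z2 - c)).
      assert (0 < m) by (apply Rmin_pos; lra).
      assert (m <= eps) by apply Rmin_l. assert (m <= z2 - c) by apply Rmin_r.
      apply (not_convex S (E 1%nat) (E 2%nat) D0 D1 _ c (c + m/2)) in Hcv; auto; try lra.
      intros z Hz. specialize (L2 z ltac:(lra)). lra.
    - set (m := Rmin eps (c - z2)).
      assert (0 < m) by (apply Rmin_pos; lra).
      assert (m <= eps) by apply Rmin_l. assert (m <= c - z2) by apply Rmin_r.
      apply (not_concave S (E 1%nat) (E 2%nat) D0 D1 _ (c - m/2) c) in Hcc; auto; try lra.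
      intros z Hz. specialize (R2 z ltac:(lra)). lra.
    - apply (not_convex S (E 1%nat) (E 2%nat) D0 D1 _ (c - eps/2) c) in Hcv; auto; try lra.
      intros z Hz. specialize (L2 z ltac:(lra)). lra.
    - apply (not_concave S (E 1%nat) (E 2%nat) D0 D1 _ c (c + eps/2)) in Hcc; auto; try lra.
      intros z Hz. specialize (R2 z ltac:(lra)). lra. }
  split; [|split; [|split; [|split]]].
  - exists z0. split; [rewrite HS; exact Z0|].
    intros k Hk. rewrite HS in Hk.
    destruct (Rtotal_order k z0) as [H|[H|H]]; auto.
    + specialize (L0 k H). lra.
    + specialize (R0 k H). lra.
  - exists z1. split; [exists 1; split; [lra| intros; apply Max]|].
    intros x [eps [Heps Hx]].
    destruct (Rtotal_order x z1) as [H|[H|H]]; auto; exfalso.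
    + set (m := Rmin eps (z1 - x)).
      assert (0 < m) by (apply Rmin_pos; lra).
      assert (m <= eps) by apply Rmin_l. assert (m <= z1 - x) by apply Rmin_r.
      assert (S (x + m/2) <= S x) by (apply Hx; rewrite Rabs_right; lra).
      assert (S x < S (x + m/2)) by (apply Inc; lra). lra.
    + set (m := Rmin eps (x - z1)).
      assert (0 < m) by (apply Rmin_pos; lra).
      assert (m <= eps) by apply Rmin_l. assert (m <= x - z1) by apply Rmin_r.
      assert (S (x - m/2) <= S x) by (apply Hx; rewrite Rabs_left; lra).
      assert (S x < S (x - m/2)) by (apply Dec; lra). lra.
  - exists z2. split; [|intros c Hc; symmetry; apply Infl; auto].
    exists 1. split; [lra|]. left. split.
    + intros x y t Hx Hy Ht. apply (Conc z2); auto; lra.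
    + intros x y t Hx Hy Ht. apply (Conv z2); auto; lra.
  - intros c Hc. apply Infl in Hc. subst c. split; [apply Conc| apply Conv]; lra.
  - apply (is_lim_ext (E 0%nat)); [intro; symmetry; apply HS|].
    unfold E, Ef. simpl.
    replace (Finite 0) with (Finite (0 - 0 + 0)) by (f_equal; ring).
    apply is_lim_plus'; [apply is_lim_minus'|].
    + apply term_lim; lra.
    + apply term_lim; lra.
    + apply sum_lim. intros i Hi'. destruct (HLi i Hi'); lra.
Qed.
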